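(* Let $M,N\ge1$ be integers and let $f_0,\ldots,f_{K-1}$ be distinct functions $\mathbb{Z}_M\to\mathbb{Z}_N$. Define the $K\times K$ matrix $\Gamma$ by $\Gamma_{j'j}=\sum_{x\in\mathbb{Z}_M}\langle f_{j'}(x)|f_j(x)\rangle$, i.e. $\Gamma_{j'j}$ is the number of $x\in\mathbb{Z}_M$ with $f_{j'}(x)=f_j(x)$. Then the standard oracle operators $U_{f_0},\ldots,U_{f_{K-1}}$ are unambiguously distinguishable if and only if $\det\Gamma>0$. Moreover, when $M=N$ and all $f_j$ are permutations of $\mathbb{Z}_M$, the minimal oracle operators $Q_{f_0},\ldots,Q_{f_{K-1}}$ are unambiguously distinguishable if and only if $\det\Gamma>0$.
   Context: Let $\mathcal{H}_M,\mathcal{H}_N$ be Hilbert spaces with orthonormal computational bases $\{|x\rangle\}_{x\in\mathbb{Z}_M}$, $\{|y\rangle\}_{y\in\mathbb{Z}_N}$. For $f:\mathbb{Z}_M\to\mathbb{Z}_N$ the standard oracle operator is the unitary $U_f$ on $\mathcal{H}_M\otimes\mathcal{H}_N$ with $U_f|x\rangle\otimes|y\rangle=|x\rangle\otimes|y\oplus f(x)\rangle$, $\oplus$ being addition mod $N$. For a permutation $f$ of $\mathbb{Z}_M$, the minimal oracle operator is the unitary $Q_f$ on $\mathcal{H}_M$ with $Q_f|x\rangle=|f(x)\rangle$. A finite list of unitary operators $W_1,\ldots,W_K$ on a finite-dimensional Hilbert space $\mathcal{H}$ is called unambiguously distinguishable if there exist a finite-dimensional ancilla space $\mathcal{H}_A$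 and a unit vector $|\psi\rangle\in\mathcal{H}\otimes\mathcal{H}_A$ such that the vectors $(W_j\otimes\mathbb{1}_A)|\psi\rangle$ are linearly independent. *)

(* Defs.v *)
From HB Require Import structures.
From mathcomp Require Import all_boot all_order all_algebra.
From mathcomp Require Import complex mxtens.
From mathcomp Require Import reals.

Set Implicit Arguments.
Unset Strict Implicit.
Unset Printing Implicit Defensive.

Import Order.TTheory GRing.Theory Num.Theory.
Local Open Scope ring_scope.

(* Z_M is represented by 'I_M; the Hilbert space H_M is 'cV[R[i]]_M with
   computational basis |x> = delta_mx x 0.  The tensor product
   H_M (x) H_N is 'cV_(M * N) with |x> (x) |y> = |x> *t |y>  (Kronecker
   product from mathcomp real_closed mxtens), and operators on tensor
   products are Kronecker products  A *t B. *)

Lemma addmod_proof (N : nat) (y z : 'I_N) : ((y + z) %% N < N)%N.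
Proof. by rewrite ltn_pmod // (leq_ltn_trans (leq0n y) (ltn_ord y)). Qed.

Definition addmod (N : nat) (y z : 'I_N) : 'I_N := Ordinal (addmod_proof y z).

Section Defs.
Variable R : realType.
Local Notation C := R[i].

Definition ket (n : nat) (x : 'I_n) : 'cV[C]_n := delta_mx x 0.

Definition inner (n : nat) (u v : 'cV[C]_n) : C := \sum_(i < n) (u i 0)^* * v i 0.

Definition std_oracle (M N : nat) (f : 'I_M -> 'I_N) : 'M[C]_(M * N) :=
  \sum_(x < M) \sum_(y < N)
     (ket x *t ket (addmod y (f x))) *m (ket x *t ket y)^T.

Definition min_oracle (M : nat) (f : 'I_M -> 'I_M) : 'M[C]_M :=
  \sum_(x < M) ket (f x) *m (ket x)^T.

(* W_0, ..., W_{K-1} on a D-dimensional space are unambiguously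
   distinguishable: there are a finite-dimensional ancilla C^dA and a unit
   vector psi in C^D (x) C^dA such that the vectors (W_j (x) 1_A) psi are
   linearly independent (the K x (D*dA) matrix having them as rows is
   row-free). *)
Definition unamb_dist (D K : nat) (W : 'I_K -> 'M[C]_D) : Prop :=
  exists (dA : nat) (psi : 'cV[C]_(D * dA)),
    inner psi psi = 1 /\
    row_free (\matrix_(j < K) ((W j *t (1%:M : 'M[C]_dA)) *m psi)^T).

Definition Gamma (M N K : nat) (f : 'I_K -> 'I_M -> 'I_N) : 'M[C]_K :=
  \matrix_(j', j) \sum_(x < M) inner (ket (f j' x)) (ket (f j x)).

End Defs.

(* Main.v *)
Require Import Defs.
From HB Require Import structures.
From mathcomp Require Import all_boot all_order all_algebra.
From mathcomp Require Import complex mxtens.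
From mathcomp Require Import reals.
From mathcomp Require Import spectral sesquilinear.
From mathcomp Require Import ring.
Import Order.TTheory GRing.Theory Num.Theory.
Local Open Scope ring_scope.
Section PSD.
Variable C : numClosedFieldType.
Local Open Scope sesquilinear_scope.

Lemma diag_gram_gt0 m n (X : 'M[C]_(m, n)) i : row_free X ->
  0 < (X *m X ^t* ) i i.
Proof.
move=> fX; rewrite !mxE.
have : row i X != 0.
  apply/negP => /eqP ri0.
  move: ri0; rewrite rowE => /eqP.
  rewrite mulmx_free_eq0 // => /eqP/matrixP/(_ 0 i); rewrite !mxE !eqxx /=.
  by rewrite mulr1n => /eqP; rewrite oner_eq0.
case/rV0Pn => k; rewrite mxE => Xk.
rewrite lt_def psumr_neq0 ?sumr_ge0 //.
- apply/andP; split => //; apply/hasP; exists k; first by rewrite mem_index_enum.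
  by rewrite !mxE mul_conjC_gt0.
- by move=> j _; rewrite !mxE mul_conjC_ge0.
- by move=> j _; rewrite !mxE mul_conjC_ge0.
Qed.

Lemma gram_det_gt0 m n (X : 'M[C]_(m, n)) : row_free X ->
  0 < \det (X *m X ^t* ).
Proof.
move=> fX; set A := X *m X ^t*.
have AH : A ^t* = A by rewrite /A trmx_mul map_mxM trmxCK.
have An : A \is normalmx by apply/normalmxP; rewrite AH.
have := orthomx_spectralP An.
set P := spectralmx A; set d := spectral_diag A => Aeq.
have Pu : P \is unitarymx := spectral_unitarymx A.
have Pun : P \in unitmx := spectral_unit A.
have dE : diag_mx d = P *m A *m P ^t*.
  rewrite Aeq invmx_unitary // !mulmxA (unitarymxP Pu) mul1mx mulmxtVK //.
rewrite Aeq !det_mulmx det_inv mulrAC mulVf ?mul1r; last first.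
  by rewrite -unitfE -unitmxE.
rewrite det_diag; apply: prodr_gt0 => i _.
have -> : d 0 i = diag_mx d i i by rewrite mxE eqxx mulr1n.
rewrite dE /A !mulmxA -[P *m X *m _ *m _]mulmxA -map_mxM -trmx_mul.
apply: diag_gram_gt0.
by rewrite /row_free eqmxMfull ?row_full_unit.
Qed.
End PSD.
Section Gen.
Local Open Scope sesquilinear_scope.
Variable R : realType.
Local Notation C := R[i].

Lemma sum_tens (m n : nat) (g : 'I_(m * n) -> C) :
  \sum_k g k = \sum_i \sum_j g (mxtens_index (i, j)).
Proof.
rewrite (reindex (@mxtens_index m n)) /=; last first.
  by exists (@mxtens_unindex m n) => k _; rewrite ?mxtens_indexK ?mxtens_unindexK.
by rewrite pair_bigA; apply: eq_bigr => -[i j].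
Qed.

Lemma sum_ind n (a : 'I_n) (g : 'I_n -> C) :
  \sum_i ((a == i)%:R * g i) = g a.
Proof.
rewrite (bigD1 a) //= eqxx mul1r big1 ?addr0 // => i.
by rewrite eq_sym => /negbTE ->; rewrite mul0r.
Qed.

Lemma ordone (i j : 'I_1) : (i == j) = true.
Proof. by rewrite !ord1. Qed.

Lemma ketE n (x i : 'I_n) j : ket R x i j = (i == x)%:R.
Proof. by rewrite mxE ordone andbT. Qed.

Lemma unamb_rowfree D K (W : 'I_K -> 'M[C]_D) n (F : 'M[C]_(K, n)) :
  (forall c : 'rV_K, c *m F = 0 -> \sum_j c 0 j *: W j = 0) ->
  unamb_dist W -> row_free F.
Proof.
move=> H [dA [psi [_ fV]]]; apply: inj_row_free => c cF0.
have S := H c cF0.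
set V := \matrix_(j < K) _ in fV.
have E : \sum_j c 0 j *: (W j *t (1%:M : 'M[C]_dA)) = 0.
  apply/matrixP => a b; rewrite summxE mxE.
  rewrite (eq_bigr (fun j => (c 0 j * W j (mxtens_unindex a).1 (mxtens_unindex b).1)
     * (1%:M : 'M[C]_dA) (mxtens_unindex a).2 (mxtens_unindex b).2)); last first.
    by move=> j _; rewrite !mxE mulrA.
  rewrite -mulr_suml.
  have := congr1 (fun M : 'M[C]_D => M (mxtens_unindex a).1 (mxtens_unindex b).1) S.
  rewrite /= summxE mxE => SE.
  rewrite (eq_bigr (fun j => (c 0 j *: W j) (mxtens_unindex a).1 (mxtens_unindex b).1)).
    by rewrite SE mul0r.
  by move=> j _; rewrite mxE.
have cV0 : c *m V = 0.
  rewrite mulmx_sum_row.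
  rewrite (eq_bigr (fun j => (c 0 j *: ((W j *t (1%:M : 'M[C]_dA)) *m psi))^T)); last first.
    by move=> j _; rewrite rowK linearZ.
  rewrite -linear_sum; under eq_bigr do rewrite scalemxAl.
  rewrite -mulmx_suml E mul0mx; exact: linear0.
by apply/eqP; rewrite -(mulmx_free_eq0 _ fV); apply/eqP.
Qed.

Lemma rowfree_gram K n (F : 'M[C]_(K, n)) (B : 'M[C]_(n, K)) :
  0 < \det (F *m B) -> row_free F.
Proof.
move=> /lt0r_neq0 d0.
have : F *m B \in unitmx by rewrite unitmxE unitfE.
rewrite -row_free_unit /row_free => /eqP r.
rewrite eqn_leq rank_leq_row /= -{1}r; exact: mxrankM_maxl.
Qed.

Lemma unamb_of D K (W : 'I_K -> 'M[C]_D) dA (psi : 'cV[C]_(D * dA))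
   (F : 'M[C]_(K, D * dA)) (s : C) :
  inner psi psi = 1 -> s != 0 -> row_free F ->
  (forall j k, ((W j *t (1%:M : 'M[C]_dA)) *m psi) k 0 = s * F j k) ->
  unamb_dist W.
Proof.
move=> n1 s0 fF E; exists dA, psi; split => //.
have -> : \matrix_(j < K) ((W j *t (1%:M : 'M[C]_dA)) *m psi)^T = s *: F.
  by apply/matrixP => j k; rewrite mxE [in LHS]mxE E mxE.
by rewrite /row_free eqmx_scale.
Qed.

Lemma sfac_prop (M : nat) : (0 < M)%N ->
  let s := (sqrtC (M%:R : C))^-1 in s != 0 /\ M%:R * (s^* * s) = 1.
Proof.
move=> M0 s.
have sq0 : 0 < sqrtC (M%:R : C) by rewrite sqrtC_gt0 ltr0n.
have sge : 0 <= s by rewrite /s invr_ge0 ltW.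
split; first by rewrite /s invr_eq0 gt_eqF.
rewrite (geC0_conj sge) -expr2 /s exprVn sqrtCK mulfV //.
by rewrite pnatr_eq0 -lt0n.
Qed.

Section Min.
Variables (M K : nat) (f : 'I_K -> 'I_M -> 'I_M).

Definition Fm : 'M[C]_(K, M * M) :=
  \matrix_(j, k) (((@mxtens_unindex M M k).1 == f j (@mxtens_unindex M M k).2))%:R.

Lemma FmE j a b : Fm j (mxtens_index (a, b)) = (a == f j b)%:R.
Proof. by rewrite mxE mxtens_indexK. Qed.

Lemma min_entry (g : 'I_M -> 'I_M) a b : min_oracle R g a b = (a == g b)%:R.
Proof.
rewrite /min_oracle summxE.
rewrite (eq_bigr (fun x => (b == x)%:R * (a == g x)%:R)); first by rewrite sum_ind.
move=> x _; rewrite mxE big_ord1 !mxE !ordone !andbT.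
by rewrite mulrC.
Qed.

Lemma Gamma_min : Gamma R f = Fm *m Fm ^t*.
Proof.
apply/matrixP => j' j; rewrite !mxE sum_tens exchange_big /=.
apply: eq_bigr => x _; rewrite /inner; apply: eq_bigr => i _.
by rewrite !mxE !mxtens_indexK /= !eqxx !andbT !conjC_nat.
Qed.

Lemma min_sum (c : 'rV[C]_K) : c *m Fm = 0 ->
  \sum_j c 0 j *: min_oracle R (f j) = 0.
Proof.
move=> cF0; apply/matrixP => a b; rewrite summxE mxE.
have := congr1 (fun v : 'rV[C]_(M * M) => v 0 (mxtens_index (a, b))) cF0.
rewrite /= !mxE => E.
transitivity (\sum_j c 0 j * Fm j (mxtens_index (a, b))); last by [].
apply: eq_bigr => j _.
by rewrite !mxE min_entry mxtens_indexK.
Qed.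

Definition psim (s : C) : 'cV[C]_(M * M) :=
  \col_k (s * ((@mxtens_unindex M M k).1 == (@mxtens_unindex M M k).2)%:R).

Lemma psim_inner s : inner (psim s) (psim s) = M%:R * (s^* * s).
Proof.
rewrite /inner sum_tens.
transitivity (\sum_(a < M) (s^* * s)); last by rewrite sumr_const card_ord mulr_natl.
apply: eq_bigr => a _.
rewrite (eq_bigr (fun b => (a == b)%:R * (s^* * s))); first by rewrite sum_ind.
move=> b _; rewrite !mxE mxtens_indexK /=.
by case: (a == b); rewrite /= ?mulr1 ?mulr0 ?mul1r ?mul0r ?conjC0 ?rmorph1.
Qed.

Lemma psim_act s j k :
  ((min_oracle R (f j) *t (1%:M : 'M[C]_M)) *m psim s) k 0 = s * Fm j k.
Proof.
case: (mxtens_indexP k) => a b.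
rewrite mxE sum_tens FmE.
rewrite (eq_bigr (fun x => (b == x)%:R * (s * min_oracle R (f j) a x))).
  by rewrite sum_ind min_entry.
move=> x _.
rewrite (eq_bigr (fun y => (b == y)%:R * (min_oracle R (f j) a x * s * (x == y)%:R))).
  by rewrite sum_ind [x == b]eq_sym mulrC [s * _]mulrC.
move=> y _; rewrite !mxE !mxtens_indexK /=.
by rewrite !mulrA [_ * (b == y)%:R]mulrC.
Qed.
End Min.
Section Std.
Variables (M N K : nat) (f : 'I_K -> 'I_M -> 'I_N).

Lemma std_entry (g : 'I_M -> 'I_N) x' y' x y :
  std_oracle R g (mxtens_index (x', y')) (mxtens_index (x, y)) =
  ((x' == x)%:R * (y' == addmod y (g x))%:R).
Proof.
rewrite /std_oracle summxE.
rewrite (eq_bigr (fun x0 => (x == x0)%:R * ((x' == x0)%:R * (y' == addmod y (g x0))%:R))).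
  by rewrite sum_ind.
move=> x0 _; rewrite summxE.
rewrite (eq_bigr (fun y0 => (y == y0)%:R * ((x == x0)%:R * ((x' == x0)%:R * (y' == addmod y0 (g x0))%:R)))).
  by rewrite sum_ind.
move=> y0 _; rewrite mxE big_ord1 !mxE !mxtens_indexK /=.
by rewrite !ordone !andbT; ring.
Qed.

Lemma subm_proof (y' y : 'I_N) : ((y' + (N - y)) %% N < N)%N.
Proof. by rewrite ltn_pmod // (leq_ltn_trans (leq0n y) (ltn_ord y)). Qed.
Definition subm (y' y : 'I_N) : 'I_N := Ordinal (subm_proof y' y).

Lemma addmod_eq (y y' w : 'I_N) : (y' == addmod y w) = (w == subm y' y).
Proof.
have yN : (y <= N)%N := ltnW (ltn_ord y).
apply/eqP/eqP => [h|h]; apply: val_inj => /=; rewrite h /=.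
- by rewrite modnDml addnAC subnKC // modnDl modn_small.
- by rewrite modnDmr addnCA subnKC // modnDr modn_small.
Qed.

Lemma addmod0 (y0 w : 'I_N) : val y0 = 0%N -> addmod y0 w = w.
Proof. by move=> h; apply: val_inj => /=; rewrite h add0n modn_small. Qed.

Definition Fs : 'M[C]_(K, (M * N) * 1) :=
  \matrix_(j, k) (let p := @mxtens_unindex M N (@mxtens_unindex (M * N) 1 k).1 in
                  (f j p.1 == p.2))%:R.

Lemma FsE j x y t : Fs j (mxtens_index (mxtens_index (x, y), t)) = (f j x == y)%:R.
Proof. by rewrite mxE !mxtens_indexK. Qed.

Lemma Gamma_std : Gamma R f = Fs *m Fs ^t*.
Proof.
apply/matrixP => j' j; rewrite !mxE sum_tens.
rewrite (eq_bigr (fun p => Fs j' (mxtens_index (p, 0)) * (Fs j (mxtens_index (p, 0)))^*)); last first.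
  by move=> p _; rewrite big_ord1 !mxE.
rewrite sum_tens; apply: eq_bigr => x _; rewrite /inner; apply: eq_bigr => y _.
by rewrite !FsE !mxE /= !eqxx !andbT !conjC_nat !(eq_sym (f _ x)).
Qed.

Lemma std_sum (c : 'rV[C]_K) : c *m Fs = 0 ->
  \sum_j c 0 j *: std_oracle R (f j) = 0.
Proof.
move=> cF0; apply/matrixP => k l; rewrite summxE mxE.
case: (mxtens_indexP k) => x' y'; case: (mxtens_indexP l) => x y.
have := congr1 (fun v : 'rV[C]_(M * N * 1) => v 0 (mxtens_index (mxtens_index (x, subm y' y), 0))) cF0.
rewrite /= !mxE => E.
transitivity ((x' == x)%:R * \sum_j c 0 j * Fs j (mxtens_index (mxtens_index (x, subm y' y), 0))).
  rewrite mulr_sumr; apply: eq_bigr => j _.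
  by rewrite mxE std_entry FsE addmod_eq; ring.
by rewrite E mulr0.
Qed.

Variable y0 : 'I_N.
Hypothesis y00 : val y0 = 0%N.

Definition psis (s : C) : 'cV[C]_((M * N) * 1) :=
  \col_k (s * ((@mxtens_unindex M N (@mxtens_unindex (M * N) 1 k).1).2 == y0)%:R).

Lemma psis_inner s : inner (psis s) (psis s) = M%:R * (s^* * s).
Proof.
rewrite /inner sum_tens.
rewrite (eq_bigr (fun p => (psis s (mxtens_index (p, 0)) 0)^* * psis s (mxtens_index (p, 0)) 0)); last first.
  by move=> p _; rewrite big_ord1.
rewrite sum_tens.
transitivity (\sum_(a < M) (s^* * s)); last by rewrite sumr_const card_ord mulr_natl.
apply: eq_bigr => a _.
rewrite (eq_bigr (fun b => (y0 == b)%:R * (s^* * s))); first by rewrite sum_ind.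
move=> b _; rewrite !mxE !mxtens_indexK /= [y0 == b]eq_sym.
by case: (b == y0); rewrite /= ?mulr1 ?mulr0 ?mul1r ?mul0r ?conjC0 ?rmorph1.
Qed.

Lemma psis_act s j k :
  ((std_oracle R (f j) *t (1%:M : 'M[C]_1)) *m psis s) k 0 = s * Fs j k.
Proof.
case: (mxtens_indexP k) => p t; case: (mxtens_indexP p) => x' y'.
rewrite FsE mxE sum_tens.
rewrite (eq_bigr (fun q => std_oracle R (f j) (mxtens_index (x', y')) q * psis s (mxtens_index (q, 0)) 0)); last first.
  by move=> q _; rewrite big_ord1 !mxE !mxtens_indexK !ordone mulr1.
rewrite sum_tens.
rewrite (eq_bigr (fun x => (x' == x)%:R * (s * (f j x' == y')%:R * (x == x')%:R))).
  by rewrite sum_ind eqxx mulr1.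
move=> x _.
rewrite (eq_bigr (fun y => (y0 == y)%:R * (s * (x' == x)%:R * (y' == addmod y (f j x))%:R))).
  rewrite sum_ind addmod0 // [y' == _]eq_sym.
  by case: (x' =P x) => [->|_]; rewrite ?eqxx /= ?(mulr1n, mulr0n, mulr1, mul1r, mulr0, mul0r).
move=> y _; rewrite std_entry !mxE !mxtens_indexK /= [y0 == y]eq_sym; ring.
Qed.
End Std.
End Gen.

Theorem theorem3 (R : realType) :
  (forall (M N K : nat) (f : 'I_K -> 'I_M -> 'I_N),
      (0 < M)%N -> (0 < N)%N -> injective f ->
      (unamb_dist (fun j => std_oracle R (f j)) <-> 0 < \det (Gamma R f)))
  /\
  (forall (M K : nat) (f : 'I_K -> 'I_M -> 'I_M),
      (0 < M)%N -> injective f -> (forall j, bijective (f j)) ->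
      (unamb_dist (fun j => min_oracle R (f j)) <-> 0 < \det (Gamma R f))).
Proof.
split.
- move=> M N K f M0 N0 _; rewrite Gamma_std; split.
  + move=> H; apply: gram_det_gt0.
    by apply: (@unamb_rowfree R _ _ _ _ _ _ H); apply: std_sum.
  + move=> /rowfree_gram fF.
    have [s0 s1] := @sfac_prop R M M0.
    apply: (@unamb_of R _ _ _ 1 (psis R M N (Ordinal N0) (sqrtC (M%:R : R[i]))^-1)
              (Fs R M N K f) _ _ s0 fF).
      by rewrite psis_inner.
    by move=> j k; rewrite psis_act.
- move=> M K f M0 _ _; rewrite Gamma_min; split.
  + move=> H; apply: gram_det_gt0.
    by apply: (@unamb_rowfree R _ _ _ _ _ _ H); apply: min_sum.
  + move=> /rowfree_gram fF.
    have [s0 s1] := @sfac_prop R M M0.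
    apply: (@unamb_of R _ _ _ M (psim R M (sqrtC (M%:R : R[i]))^-1)
              (Fm R M K f) _ _ s0 fF).
      by rewrite psim_inner.
    by move=> j k; rewrite psim_act.
Qed.
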